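(* Let $\Pi$ be an indecomposable reduced crystallographic root system. Let $\gamma \in \Pi_+$, $\alpha \in \Delta$ and an integer $c > 0$ be such that $\gamma - c\alpha \in \Pi_+$. Let $\beta \in \Pi_+$ satisfy $\beta \le \gamma$, $c_\alpha(\beta) = c_\alpha(\gamma)$ and $\beta \neq \alpha$. Then $\beta - c\alpha \in \Pi_+$.
   Context: $\Delta$ denotes the simple roots and $\Pi_+$ the positive roots. For a root $\beta$, $c_\alpha(\beta)$ is the coefficient of $\alpha$ in the expansion $\beta = \sum_{\alpha\in\Delta} c_\alpha(\beta)\alpha$. $\beta\le\gamma$ iff $\gamma-\beta$ is a nonnegative integer combination of simple roots. *)

(* Defs.v *)
From HB Require Import structures.
From mathcomp Require Import all_boot all_order all_algebra.
Set Implicit Arguments. Unset Strict Implicit. Unset Printing Implicit Defensive.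
Import Order.TTheory GRing.Theory Num.Theory.
Local Open Scope ring_scope.

Section RootSystems.
Variables (R : realFieldType) (n : nat).

Definition dot (u v : 'rV[R]_n) : R := (u *m v^T) 0 0.

Definition cartan (b a : 'rV[R]_n) : R := 2 * dot b a / dot a a.

Definition roots_mx (Phi : seq 'rV[R]_n) : 'M[R]_(size Phi, n) :=
  \matrix_(i < size Phi) nth 0 Phi i.

Definition reduced_crystallographic_root_system (Phi : seq 'rV[R]_n) : Prop :=
  [/\ (0 : 'rV[R]_n) \notin Phi,
      row_full (roots_mx Phi),
      (forall a b, a \in Phi -> b \in Phi -> b - cartan b a *: a \in Phi),
      (forall a b, a \in Phi -> b \in Phi -> exists z : int, cartan b a = z%:~R)
    & (forall a (k : R), a \in Phi -> k *: a \in Phi -> k = 1 \/ k = -1)].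

Definition indecomposable (Phi : seq 'rV[R]_n) : Prop :=
  forall P : pred 'rV[R]_n,
    (forall a b, a \in Phi -> b \in Phi -> P a -> ~~ P b -> dot a b = 0) ->
    all P Phi \/ all (predC P) Phi.

Definition icomb r (k : 'rV[int]_r) (D : 'M[R]_(r, n)) : 'rV[R]_n :=
  map_mx (fun z : int => z%:~R) k *m D.

Definition nonneg_row r (k : 'rV[int]_r) : Prop := forall i, 0 <= k 0 i.
Definition nonpos_row r (k : 'rV[int]_r) : Prop := forall i, k 0 i <= 0.

(* The rows of D form a set Delta of simple roots (a base) of Phi:
   they are roots, linearly independent, and every root is an integer
   combination of them with coefficients all >= 0 or all <= 0. *)
Definition simple_roots (Phi : seq 'rV[R]_n) r (D : 'M[R]_(r, n)) : Prop :=
  [/\ (forall i, row i D \in Phi),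
      row_free D
    & (forall b, b \in Phi -> exists k : 'rV[int]_r,
          b = icomb k D /\ (nonneg_row k \/ nonpos_row k))].

Definition pos_root (Phi : seq 'rV[R]_n) r (D : 'M[R]_(r, n)) (b : 'rV[R]_n) :=
  b \in Phi /\ exists k : 'rV[int]_r, nonneg_row k /\ b = icomb k D.

Definition root_le r (D : 'M[R]_(r, n)) (b g : 'rV[R]_n) : Prop :=
  exists k : 'rV[int]_r, nonneg_row k /\ g - b = icomb k D.

(* c_{alpha_a}(b): coefficient of the a-th simple root in b
   (well defined since D is row-free and b lies in its row space) *)
Definition coef r (D : 'M[R]_(r, n)) (a : 'I_r) (b : 'rV[R]_n) : R :=
  (b *m pinvmx D) 0 a.

End RootSystems.

(* Main.v *)
Require Import Defs.
From HB Require Import structures.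
From mathcomp Require Import all_boot all_order all_algebra.
From mathcomp Require Import ring lra zify.
Set Implicit Arguments. Unset Strict Implicit. Unset Printing Implicit Defensive.
Import Order.TTheory GRing.Theory Num.Theory.
Local Open Scope ring_scope.



Section Dot.
Variables (R : realFieldType) (n : nat).
Implicit Types u v w : 'rV[R]_n.

Lemma dotC u v : dot u v = dot v u.
Proof. by rewrite /dot -[u *m v^T]trmxK trmx_mul trmxK mxE. Qed.
Lemma dotDl u w v : dot (u + w) v = dot u v + dot w v.
Proof. by rewrite /dot mulmxDl mxE. Qed.
Lemma dotZl k u v : dot (k *: u) v = k * dot u v.
Proof. by rewrite /dot -scalemxAl mxE. Qed.
Lemma dotNl u v : dot (- u) v = - dot u v.
Proof. by rewrite -scaleN1r dotZl mulN1r. Qed.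
Lemma dotBl u w v : dot (u - w) v = dot u v - dot w v.
Proof. by rewrite dotDl dotNl. Qed.
Lemma dotDr u v w : dot u (v + w) = dot u v + dot u w.
Proof. by rewrite dotC dotDl !(dotC u). Qed.
Lemma dotZr k u v : dot u (k *: v) = k * dot u v.
Proof. by rewrite dotC dotZl dotC. Qed.
Lemma dotNr u v : dot u (- v) = - dot u v.
Proof. by rewrite dotC dotNl dotC. Qed.
Lemma dotBr u v w : dot u (v - w) = dot u v - dot u w.
Proof. by rewrite dotDr dotNr. Qed.
Lemma dot0l v : dot 0 v = 0.
Proof. by rewrite /dot mul0mx mxE. Qed.
Lemma dot0r v : dot v 0 = 0.
Proof. by rewrite dotC dot0l. Qed.
Lemma dotE u : dot u u = \sum_j u 0 j ^+ 2.
Proof. by rewrite /dot mxE; apply: eq_bigr => j _; rewrite mxE. Qed.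
Lemma dot_ge0 u : 0 <= dot u u.
Proof. by rewrite dotE; apply: sumr_ge0 => j _; apply: sqr_ge0. Qed.
Lemma dot_gt0 u : u != 0 -> 0 < dot u u.
Proof.
move=> nz; have [j uj] : exists j, u 0 j != 0.
  apply/existsP; apply: contraR nz; rewrite negb_exists => /forallP H.
  by apply/eqP/rowP => j; rewrite mxE; apply/eqP; have := H j; rewrite negbK.
rewrite dotE (bigD1 j) //=.
have h1 : 0 < u 0 j ^+ 2 by rewrite lt_def sqrf_eq0 uj sqr_ge0.
have h2 : 0 <= \sum_(i | i != j) u 0 i ^+ 2 by apply: sumr_ge0 => i _; apply: sqr_ge0.
lra.
Qed.
End Dot.



Section Roots.
Variables (R : realFieldType) (n r : nat) (Phi : seq 'rV[R]_n) (D : 'M[R]_(r, n)).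
Hypothesis HR : reduced_crystallographic_root_system Phi.

Lemma root_neq0 x : x \in Phi -> x != 0.
Proof. by case: HR => H0 _ _ _ _ Hx; apply: contraNneq H0 => <-. Qed.

Lemma root_neg x : x \in Phi -> - x \in Phi.
Proof.
move=> Hx; case: HR => _ _ Href _ _.
have := Href x x Hx Hx; have gx := dot_gt0 (root_neq0 Hx).
have -> : cartan x x = 2 by rewrite /cartan mulfK // gt_eqF.
by rewrite scaler_nat mulr2n opprD addrA subrr add0r.
Qed.

Lemma root_sub x y : x \in Phi -> y \in Phi -> 0 < dot x y -> x != y ->
  x - y \in Phi.
Proof.
move=> Hx Hy pxy nxy; case: HR => _ _ Href Hint Hred.
have gx := dot_gt0 (root_neq0 Hx); have gy := dot_gt0 (root_neq0 Hy).
have CS : dot x y ^+ 2 < dot x x * dot y y.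
  rewrite ltNge; apply/negP => Hle.
  pose t := dot x y / dot y y.
  have Hv : dot (x - t *: y) (x - t *: y) <= 0.
    rewrite dotBl !dotBr !dotZl !dotZr (dotC y x) /t.
    rewrite (_ : _ - _ = (dot x x * dot y y - dot x y ^+ 2) / dot y y); last first.
      by field; rewrite gt_eqF.
    by rewrite ler_pdivrMr // mul0r subr_le0.
  have v0 : x - t *: y = 0.
    apply/eqP; apply: contraTT Hv => /dot_gt0; rewrite -ltNge; exact.
  have xt : x = t *: y by apply/eqP; rewrite -subr_eq0 v0.
  have := Hred y t Hy; rewrite -xt => /(_ Hx) [t1|tm1].
    by move: nxy; rewrite xt t1 scale1r eqxx.
  by move: pxy; rewrite xt tm1 scaleN1r dotNl oppr_gt0 ltNge ltW.
have [z1 Hz1] := Hint y x Hy Hx; have [z2 Hz2] := Hint x y Hx Hy.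
have z1p : 0 < z1 by rewrite -(ltr0z R) -Hz1 /cartan divr_gt0 // mulr_gt0.
have z2p : 0 < z2 by rewrite -(ltr0z R) -Hz2 /cartan dotC divr_gt0 // mulr_gt0.
have z12 : z1 * z2 < 4.
  rewrite -(ltr_int R) intrM -Hz1 -Hz2 /cartan (dotC y x).
  have q1 : dot x y ^+ 2 / (dot x x * dot y y) < 1 by rewrite ltr_pdivrMr ?mul1r // mulr_gt0.
  have -> : 2 * dot x y / dot y y * (2 * dot x y / dot x x) = 4 * (dot x y ^+ 2 / (dot x x * dot y y)) by field; rewrite !gt_eqF.
  rewrite (_ : 4%:~R = 4) //; lra.
have [e1|e2] : z1 = 1 \/ z2 = 1 by nia.
  by have := Href y x Hy Hx; rewrite Hz1 e1 scale1r.
have := root_neg (Href x y Hx Hy); by rewrite Hz2 e2 scale1r opprB.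
Qed.

Lemma root_add x y : x \in Phi -> y \in Phi -> dot x y < 0 -> x != - y ->
  x + y \in Phi.
Proof.
move=> Hx Hy nxy ne; rewrite -[y]opprK; apply: root_sub => //.
  exact: root_neg.
by rewrite dotNr oppr_gt0.
Qed.

End Roots.



Lemma nz_rowv (V : zmodType) m (k : 'rV[V]_m) : k != 0 -> exists j, k 0 j != 0.
Proof.
move=> nz; apply/existsP; apply: contraR nz; rewrite negb_exists => /forallP H.
by apply/eqP/rowP => j; rewrite mxE; apply/eqP; have := H j; rewrite negbK.
Qed.

Section Coefs.
Variables (R : realFieldType) (n r : nat) (Phi : seq 'rV[R]_n) (D : 'M[R]_(r, n)).
Hypothesis HR : reduced_crystallographic_root_system Phi.
Hypothesis HS : simple_roots Phi D.

Definition ev (i : 'I_r) : 'rV[int]_r := delta_mx 0 i.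

Lemma ev_entry i j : ev i 0 j = (j == i)%:R.
Proof. by rewrite /ev mxE eqxx. Qed.

Lemma icombD k1 k2 : icomb (k1 + k2) D = icomb k1 D + icomb k2 D.
Proof. by rewrite /icomb map_mxD mulmxDl. Qed.
Lemma icombN k : icomb (- k) D = - icomb k D.
Proof. by rewrite /icomb map_mxN mulNmx. Qed.
Lemma icombB k1 k2 : icomb (k1 - k2) D = icomb k1 D - icomb k2 D.
Proof. by rewrite icombD icombN. Qed.
Lemma icomb0 : icomb 0 D = 0.
Proof. by rewrite /icomb map_mx0 mul0mx. Qed.
Lemma icomb_ev i : icomb (ev i) D = row i D.
Proof. by rewrite /icomb /ev map_delta_mx rowE. Qed.
Lemma icombE k : icomb k D = \sum_i (k 0 i)%:~R *: row i D.
Proof. by rewrite /icomb mulmx_sum_row; apply: eq_bigr => i _; rewrite mxE. Qed.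

Lemma icomb_inj k1 k2 : icomb k1 D = icomb k2 D -> k1 = k2.
Proof.
case: HS => _ Hfree _ /(row_free_inj Hfree) E.
apply/rowP => j; have := congr1 (fun M : 'rV[R]_r => M 0 j) E; rewrite !mxE => /eqP.
by rewrite eqr_int => /eqP.
Qed.

Lemma coef_icomb a k : coef D a (icomb k D) = (k 0 a)%:~R.
Proof.
case: HS => _ Hfree _.
by rewrite /coef /icomb -mulmxA mulmxVp // mulmx1 mxE.
Qed.

Lemma mixed x k i j : x \in Phi -> x = icomb k D -> 0 < k 0 i -> k 0 j < 0 -> False.
Proof.
case: HS => _ _ Hc Hx Ex ki kj.
have [k' [E' [H|H]]] := Hc x Hx; rewrite Ex in E'; have kk := icomb_inj E'; subst k'.
  by have := H j; rewrite leNgt kj.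
by have := H i; rewrite leNgt ki.
Qed.

Lemma row_inj i j : row i D = row j D -> i = j.
Proof.
rewrite -!icomb_ev => /icomb_inj /(congr1 (fun M : 'rV[int]_r => M 0 i)).
by rewrite !ev_entry eqxx; case: eqP => // _ /eqP; rewrite oner_eq0.
Qed.

Lemma simple_dot i j : i != j -> dot (row i D) (row j D) <= 0.
Proof.
move=> ij; rewrite leNgt; apply/negP => pos.
have Hi : row i D \in Phi by case: HS.
have Hj : row j D \in Phi by case: HS.
have ne : row i D != row j D by apply: contraNneq ij => /row_inj ->.
have := root_sub HR Hi Hj pos ne; rewrite -!icomb_ev -icombB => H.
apply: (mixed H (erefl _) (i := i) (j := j)); rewrite !mxE !eqxx /=.
  by rewrite (negbTE ij) subr0.
by rewrite eq_sym (negbTE ij) sub0r oppr_lt0.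
Qed.

End Coefs.



Section String.
Variables (R : realFieldType) (n : nat) (Phi : seq 'rV[R]_n).
Hypothesis HR : reduced_crystallographic_root_system Phi.

Lemma string x al N : x \in Phi -> al \in Phi -> x != al ->
  x - N%:R *: al \in Phi -> forall j, (j <= N)%N -> x - j%:R *: al \in Phi.
Proof.
move=> Hx Ha nxa HN.
have Hred : forall (a : 'rV[R]_n) (k : R), a \in Phi -> k *: a \in Phi -> k = 1 \/ k = -1.
  by case: HR.
pose A := dot al al; have gA : 0 < A := dot_gt0 (root_neq0 HR Ha).
pose d := dot x al.
have dj : forall j : nat, dot (x - j%:R *: al) al = d - j%:R * A.
  by move=> j; rewrite dotBl dotZl.
have F : forall j, (j <= N)%N -> (j%:R - 1) * A < d -> x - j%:R *: al \in Phi.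
  elim => [|j IH] jN lt; first by rewrite scale0r subr0.
  move: lt; rewrite -natr1 => lt.
  have Sj : x - j%:R *: al \in Phi.
    by apply: IH; [exact: ltnW | lra].
  have pos : 0 < dot (x - j%:R *: al) al by rewrite dj; lra.
  have ne : x - j%:R *: al != al.
    apply/eqP => E.
    have h : x - j%:R *: al + j%:R *: al = x by rewrite subrK.
    rewrite E in h.
    have xe : x = (j.+1)%:R *: al by rewrite -h -natr1 scalerDl scale1r addrC.
    have := Hred al (j.+1)%:R Ha; rewrite -xe => /(_ Hx) [e|e].
      move/eqP: e; rewrite pnatr_eq1 => /eqP [] j0; subst j.
      by move: nxa; rewrite xe scale1r eqxx.
    by have := ltr0Sn R j; rewrite e ltr0N1.
  have := root_sub HR Sj Ha pos ne.
  by rewrite scalerDl scale1r opprD addrA.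
have B : forall m, (m <= N)%N -> d < ((N - m)%:R + 1) * A ->
    x - (N - m)%:R *: al \in Phi.
  elim => [|m IH] mN lt; first by rewrite subn0.
  have [k Ek] : exists k, (N - m = k.+1)%N by exists (N - m.+1)%N; lia.
  have Ek' : (N - m.+1 = k)%N by lia.
  rewrite Ek'; rewrite Ek' in lt.
  have Sk : x - (k.+1)%:R *: al \in Phi.
    rewrite -Ek; apply: IH; first exact: ltnW.
    by rewrite Ek -natr1; lra.
  have neg : dot (x - (k.+1)%:R *: al) al < 0 by rewrite dj -natr1; lra.
  have ne : x - (k.+1)%:R *: al != - al.
    apply/eqP => E.
    have h : x - (k.+1)%:R *: al + (k.+1)%:R *: al = x by rewrite subrK.
    rewrite E in h.
    have xe : x = k%:R *: al by rewrite -h -natr1 scalerDl scale1r addrC addrK.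
    case: k {Ek Ek' lt Sk neg E h} xe => [|k] xe.
      by move: (root_neq0 HR Hx); rewrite xe scale0r eqxx.
    have := Hred al (k.+1)%:R Ha; rewrite -xe => /(_ Hx) [e|e].
      move/eqP: e; rewrite pnatr_eq1 => /eqP [] k0; subst k.
      by move: nxa; rewrite xe scale1r eqxx.
    by have := ltr0Sn R k; rewrite e ltr0N1.
  have := root_add HR Sk Ha neg ne.
  by rewrite -natr1 scalerDl scale1r opprD -addrA subrK.
move=> j jN; have [h|h] := ltP ((j%:R - 1) * A) d; first exact: F.
have := B (N - j)%N (leq_subr _ _); rewrite subKn //; apply; lra.
Qed.

End String.



Section Base.
Variables (R : realFieldType) (n r : nat) (Phi : seq 'rV[R]_n) (D : 'M[R]_(r, n)).
Hypothesis HR : reduced_crystallographic_root_system Phi.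
Hypothesis HS : simple_roots Phi D.

Lemma mixed_ad a d x : x \in Phi -> x = row a D - icomb d D ->
  (forall i, 0 <= d 0 i) -> d 0 a = 0 -> d != 0 -> False.
Proof.
move=> Hx Ex dpos da dnz; have [j dj] := nz_rowv dnz.
have ja : j != a by apply: contraNneq dj => ->; rewrite da.
apply: (mixed HS Hx (k := ev a - d) (i := a) (j := j)).
- by rewrite Ex icombB icomb_ev.
- by rewrite !mxE !eqxx da subr0.
- rewrite !mxE eqxx (negbTE ja) /= sub0r oppr_lt0 lt_def dj; exact: dpos.
Qed.

Lemma sum_ev (i : 'I_r) : \sum_j ev i 0 j = 1.
Proof.
rewrite (bigD1 i) //= ev_entry eqxx big1 ?addr0 // => j ji.
by rewrite ev_entry (negbTE ji).
Qed.

Lemma mxB_entry (k1 k2 : 'rV[int]_r) j : (k1 - k2) 0 j = k1 0 j - k2 0 j.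
Proof. by rewrite !mxE. Qed.

Lemma step a b g d : b \in Phi -> b != row a D -> g \in Phi ->
  g - row a D \in Phi -> g - b = icomb d D -> (forall i, 0 <= d 0 i) ->
  d 0 a = 0 -> d != 0 ->
  (forall g' d', g' \in Phi -> g' - row a D \in Phi -> g' - b = icomb d' D ->
     (forall i, 0 <= d' 0 i) -> d' 0 a = 0 ->
     \sum_i d' 0 i = \sum_i d 0 i - 1 -> b - row a D \in Phi) ->
  b - row a D \in Phi.
Proof.
move=> Hb nba Hg Hga Egb dpos da dnz IH.
have Hrow : forall i, row i D \in Phi by case: HS.
have Eb : b = g - icomb d D by rewrite -Egb; apply/rowP => j; rewrite !mxE; ring.
case: (boolP [exists i, (0 < d 0 i) && (0 < dot (row i D) g)]).
- move=> /existsP [i /andP [di gi]].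
  have ia : i != a by apply: contraTneq di => ->; rewrite da ltxx.
  have ngi : g != row i D.
    apply/eqP => E; apply: (mixed HS Hga (k := ev i - ev a) (i := i) (j := a)).
    + by rewrite E icombB !icomb_ev.
    + by rewrite !mxE !eqxx (negbTE ia) subr0.
    + by rewrite !mxE !eqxx eq_sym (negbTE ia) sub0r oppr_lt0.
  have p1 : 0 < dot g (row i D) by rewrite dotC.
  have Hg' : g - row i D \in Phi := root_sub HR Hg (Hrow i) p1 ngi.
  have p2 : 0 < dot (g - row a D) (row i D).
    rewrite dotBl; have := simple_dot HR HS (i := a) (j := i); rewrite eq_sym ia.
    by rewrite dotC in gi; move=> /(_ isT); lra.
  have nga : g - row a D != row i D.
    apply/eqP => E.
    have Eb2 : b = icomb (ev a + ev i - d) D.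
      rewrite icombB icombD !icomb_ev -E Eb; apply/rowP => j; rewrite !mxE; ring.
    case: HS => _ _ Hc; have [k [Ek Hs]] := Hc b Hb.
    rewrite Eb2 in Ek; have kk := icomb_inj HS Ek; subst k.
    case: Hs => Hs; last first.
      have := Hs a; rewrite !mxE !eqxx /= eq_sym (negbTE ia) da => h.
      by clear -h; lia.
    have dE : d = ev i.
      apply/rowP => j; have h1 := Hs j; have h2 := dpos j; move: h1.
      rewrite !mxE !eqxx /=.
      case: (eqVneq j i) => [->|ji].
        rewrite (negbTE ia) /= add0r; move: (d 0 i) di => x xp h.
        by clear -xp h; lia.
      case: (eqVneq j a) => [->|ja]; first by rewrite da.
      move: (d 0 j) h2 => x xp; rewrite /= !mulr0n add0r => h.
      by clear -xp h; lia.
    move/eqP: nba; apply; rewrite Eb dE icomb_ev -E.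
    by apply/rowP => j; rewrite !mxE; ring.
  have Hg'a : g - row i D - row a D \in Phi.
    by have := root_sub HR Hga (Hrow i) p2 nga; rewrite addrAC.
  apply: (IH (g - row i D) (d - ev i)) => //.
  + by rewrite icombB icomb_ev -Egb addrAC.
  + move=> j; rewrite !mxE eqxx /=; have := dpos j.
    case: (eqVneq j i) => [->|_] /=.
      by move: (d 0 i) di => x xp h; clear -xp h; lia.
    by rewrite subr0.
  + by rewrite !mxE eqxx /= eq_sym (negbTE ia) da subr0.
  + under eq_bigr => j _ do rewrite mxB_entry.
    by rewrite sumrB sum_ev.
- move=> nT.
  have nT' : forall i, 0 < d 0 i -> dot (row i D) g <= 0.
    move=> i di; rewrite leNgt; apply: contra nT => gi; apply/existsP; exists i.
    by rewrite di gi.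
  have s1 : dot (icomb d D) g <= 0.
    rewrite icombE (big_morph (fun u => dot u g) (fun u w => dotDl u w g) (dot0l g)).
    apply: sumr_le0 => i _; rewrite dotZl.
    have := dpos i; rewrite le0r => /orP [/eqP->|di]; first by rewrite mul0r.
    by apply: mulr_ge0_le0; [rewrite ler0z ltW | exact: nT' i di].
  have gg := dot_gt0 (root_neq0 HR Hg).
  have bg : 0 < dot b g by rewrite Eb dotBl; lra.
  have nbga : b != g - row a D.
    apply/eqP => E.
    have : icomb d D = icomb (ev a) D.
      by rewrite -Egb E icomb_ev; apply/rowP => j; rewrite !mxE; ring.
    move/(icomb_inj HS) => dE; move: da; rewrite dE ev_entry eqxx => /eqP.
    by rewrite oner_eq0.
  have h2 : dot b (g - row a D) <= 0.
    rewrite leNgt; apply/negP => p; have := root_sub HR Hb Hga p nbga => H.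
    apply: (mixed_ad H _ dpos da dnz).
    by rewrite Eb; apply/rowP => j; rewrite !mxE; ring.
  have pba : 0 < dot b (row a D) by move: h2; rewrite dotBr; lra.
  by have := root_sub HR Hb (Hrow a) pba nba.
Qed.

Lemma base a b : b \in Phi -> b != row a D -> forall h g (d : 'rV[int]_r),
  \sum_i d 0 i <= h%:Z -> g \in Phi -> g - row a D \in Phi ->
  g - b = icomb d D -> (forall i, 0 <= d 0 i) -> d 0 a = 0 ->
  b - row a D \in Phi.
Proof.
move=> Hb nba; elim => [|h IH] g d hs Hg Hga Egb dpos da.
  have [d0|dnz] := eqVneq d 0.
    by move: Egb; rewrite d0 icomb0 => /eqP; rewrite subr_eq0 => /eqP <-.
  apply: (step Hb nba Hg Hga Egb dpos da dnz) => g' d' _ _ _ dpos' _ E.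
  have : 0 <= \sum_i d' 0 i by apply: sumr_ge0 => i _; exact: dpos'.
  by rewrite E; move: hs; lia.
have [d0|dnz] := eqVneq d 0.
  by move: Egb; rewrite d0 icomb0 => /eqP; rewrite subr_eq0 => /eqP <-.
apply: (step Hb nba Hg Hga Egb dpos da dnz) => g' d' Hg' Hga' Egb' dpos' da' E.
apply: (IH g' d') => //; rewrite E; move: hs; lia.
Qed.

End Base.



Section Core.
Variables (R : realFieldType) (n r : nat) (Phi : seq 'rV[R]_n) (D : 'M[R]_(r, n)).
Hypothesis HR : reduced_crystallographic_root_system Phi.
Hypothesis HS : simple_roots Phi D.

Lemma core a : forall m g b d, g \in Phi -> g - (m.+1)%:R *: row a D \in Phi ->
  b \in Phi -> b != row a D -> g - b = icomb d D -> (forall i, 0 <= d 0 i) ->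
  d 0 a = 0 -> b - (m.+1)%:R *: row a D \in Phi.
Proof.
have Hrow : forall i, row i D \in Phi by case: HS.
have Hred : forall (x : 'rV[R]_n) (k : R), x \in Phi -> k *: x \in Phi -> k = 1 \/ k = -1.
  by case: HR.
elim => [|m IH] g b d Hg Hgm Hb nba Egb dpos da.
  move: Hgm; rewrite mulr1n scale1r => Hga.
  have hs : \sum_i d 0 i <= (absz (\sum_i d 0 i))%:Z by rewrite abszE ler_norm.
  exact: (base HR HS Hb nba hs Hg Hga Egb dpos da).
have Hga : g != row a D.
  apply/eqP => E.
  have [d0|dnz] := eqVneq d 0.
    by move: nba Egb; rewrite d0 icomb0 E => /eqP nba /eqP; rewrite subr_eq0 eq_sym => /eqP.
  apply: (mixed_ad HS Hb _ dpos da dnz).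
  by rewrite -E -Egb; apply/rowP => j; rewrite !mxE; ring.
have Hgm1 : g - (m.+1)%:R *: row a D \in Phi.
  exact: (string HR Hg (Hrow a) Hga Hgm (leqnSn _)).
have IHb := IH g b d Hg Hgm1 Hb nba Egb dpos da.
have nb' : b - (m.+1)%:R *: row a D != row a D.
  apply/eqP => E.
  have Eb : b = (m.+2)%:R *: row a D.
    rewrite -(subrK ((m.+1)%:R *: row a D) b) E -(@natr1 R m.+1) scalerDl scale1r.
    by rewrite addrC.
  have := Hred _ (m.+2)%:R (Hrow a); rewrite -Eb => /(_ Hb) [e|e].
    by move/eqP: e; rewrite pnatr_eq1.
  by have := ltr0Sn R m.+1; rewrite e ltr0N1.
have Egb' : g - (m.+1)%:R *: row a D - (b - (m.+1)%:R *: row a D) = icomb d D.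
  by rewrite -Egb; apply/rowP => j; rewrite !mxE; ring.
have Hgm2 : g - (m.+1)%:R *: row a D - row a D \in Phi.
  by move: Hgm; rewrite -(@natr1 R m.+1) scalerDl scale1r opprD addrA.
have hs : \sum_i d 0 i <= (absz (\sum_i d 0 i))%:Z by rewrite abszE ler_norm.
have := base HR HS IHb nb' hs Hgm1 Hgm2 Egb' dpos da.
by rewrite -(@natr1 R m.+1) scalerDl scale1r opprD addrA.
Qed.

Lemma icombMn k m : icomb (k *+ m) D = icomb k D *+ m.
Proof. by elim: m => [|m IH]; rewrite ?mulr0n ?icomb0 // !mulrS icombD IH. Qed.

End Core.

Lemma rowMn_entry r (k : 'rV[int]_r) m j : (k *+ m) 0 j = k 0 j *+ m.
Proof. by elim: m => [|m IH]; rewrite ?mulr0n ?mxE // !mulrS mxE IH. Qed.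

Unset Implicit Arguments.

Theorem lemma4 (R : realFieldType) (n r : nat) (Phi : seq 'rV[R]_n)
    (D : 'M[R]_(r, n)) (g b : 'rV[R]_n) (a : 'I_r) (c : nat) :
  reduced_crystallographic_root_system Phi ->
  indecomposable Phi ->
  simple_roots Phi D ->
  pos_root Phi D g ->
  (0 < c)%N ->
  pos_root Phi D (g - c%:R *: row a D) ->
  pos_root Phi D b ->
  root_le D b g ->
  coef D a b = coef D a g ->
  b != row a D ->
  pos_root Phi D (b - c%:R *: row a D).
Proof.
move=> HR _ HS [Hg [kg [kgp Eg]]] c0 [He [ke [kep Ee]]] [Hb [kb [kbp Eb]]]
  [kd [kdp Ed]] Hcoef nba.
have kdE : kd = kg - kb by apply: (icomb_inj HS); rewrite icombB -Ed Eg Eb.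
have kab : kb 0 a = kg 0 a.
  by move: Hcoef; rewrite Eb Eg !(coef_icomb HS) => /eqP; rewrite eqr_int => /eqP.
have kda : kd 0 a = 0 by rewrite kdE mxB_entry kab subrr.
have keE : ke = kg - ev a *+ c.
  by apply: (icomb_inj HS); rewrite icombB (icombMn D) icomb_ev -Ee Eg scaler_nat.
have kgc : c%:Z <= kg 0 a.
  have := kep a; rewrite keE mxB_entry rowMn_entry ev_entry eqxx natz; lia.
split.
  case: c c0 He Ee keE kgc => [//|m] _ He Ee keE kgc.
  by have := core HR HS Hg He Hb nba Ed kdp kda.
exists (kb - ev a *+ c); split.
  move=> j; rewrite mxB_entry rowMn_entry ev_entry; have := kbp j.
  case: (eqVneq j a) => [->|_]; last by rewrite mul0rn subr0.
  by rewrite natz kab; lia.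
by rewrite icombB (icombMn D) icomb_ev Eb scaler_nat.
Qed.
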